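(* Let $\mathcal{FV}(\Omega)$ be a dom-space and $E$ a non-trivial locally convex Hausdorff space over $\mathbb{K}$ with directed fundamental system of seminorms $(p_\alpha)_{\alpha\in\mathfrak{A}}$. Then (a) $T^{\mathbb{K}}_{m,x}\in\mathcal{FV}(\Omega)'$ for all $m\in M$ and $x\in\omega_m$; (b) the topology of $\mathcal{FV}(\Omega)\varepsilon E$ is given by the system of seminorms $\|u\|_{j,m,\alpha}:=\sup_{x\in\omega_m}p_\alpha\bigl(u(T^{\mathbb{K}}_{m,x})\bigr)\nu_{j,m}(x)$, $u\in\mathcal{FV}(\Omega)\varepsilon E$, for $j\in J$, $m\in M$, $\alpha\in\mathfrak{A}$.
   Context: $\mathbb{K}\in\{\mathbb{R},\mathbb{C}\}$. Let $\Omega$ be a non-empty set, $J,M$ non-empty index sets, $(\omega_m)_{m\in M}$ non-empty sets and $\nu_{j,m}\colon\omega_m\to[0,\infty)$ such that for all $m$, $x\in\omega_m$ there is $j$ with $\nu_{j,m}(x)>0$. Let $\operatorname{AP}(\Omega)\subset\mathbb{K}^\Omega$ be a linear subspace and $T^{\mathbb{K}}_m\colon\operatorname{dom}T^{\mathbb{K}}_m\to\mathbb{K}^{\omega_m}$ linear maps on linear subspaces $\operatorname{dom}T^{\mathbb{K}}_m\subset\mathbb{K}^\Omega$. $\mathcal{FV}(\Omega):=\{f\in\operatorname{AP}(\Omega)\cap\bigcap_m\operatorname{dom}T^{\mathbb{K}}_m: |f|_{j,m}:=\sup_{x\in\omega_m}|T^{\mathbb{K}}_m(f)(x)|\nu_{j,m}(x)<\infty\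 \forall j,m\}$ with these seminorms; $T^{\mathbb{K}}_{m,x}(f):=T^{\mathbb{K}}_m(f)(x)$ (restricted to $\mathcal{FV}(\Omega)$). $\mathcal{FV}(\Omega)$ is a dom-space if it is Hausdorff, the system $(|\cdot|_{j,m})$ is directed and every point evaluation $\delta_x\colon f\mapsto f(x)$, $x\in\Omega$, is in $\mathcal{FV}(\Omega)'$. $\mathcal{FV}(\Omega)\varepsilon E$ is the space of continuous linear maps $\mathcal{FV}(\Omega)'_\kappa\to E$ ($\kappa$: topology of uniform convergence on absolutely convex compact subsets of $\mathcal{FV}(\Omega)$), equipped with the topology of uniform convergence on equicontinuous subsets of $\mathcal{FV}(\Omega)'$. *)

(* Defs.v *)
From mathcomp Require Import all_boot all_order all_algebra.
From mathcomp Require Import all_classical all_reals.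
From mathcomp Require Import complex.
Import Order.TTheory GRing.Theory Num.Theory.

Set Implicit Arguments.
Unset Strict Implicit.
Unset Printing Implicit Defensive.

Local Open Scope ring_scope.
Local Open Scope classical_set_scope.

(* The scalar field K in {R, C}: [KK R true] is R, [KK R false] is     *)
(* C = R[i] (complex numbers over the real numbers R).                 *)
Definition KK (R : realType) (b : bool) : numFieldType :=
  if b then (R : numFieldType) else (R[i] : numFieldType).

Definition absK (R : realType) (b : bool) : KK R b -> R :=
  match b return KK R b -> R with
  | true => fun x => `|x|
  | false => fun z => complex.Re `|z|
  end.

Section LCS.
Context (R : realType) (b : bool).
Local Notation K := (KK R b).
Local Notation aK := (@absK R b).

Definition bigmax (I : Type) (s : seq I) (F : I -> R) : R :=
  \big[Num.max/0]_(i <- s) F i.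

(* The (relative) topology generated on a set S of functions T -> W by a
   family of seminorms (p i)_i : U is open iff U is contained in S and
   every point v of U has a neighbourhood
   {w in S | max_{i in s} p_i(w - v) < e}, s finite, e > 0, inside U. *)
Definition sn_open (T : Type) (W : zmodType) (I : Type) (S : set (T -> W))
    (p : I -> (T -> W) -> R) (U : set (T -> W)) : Prop :=
  U `<=` S /\
  forall v, U v -> exists (s : seq I) (e : R), 0 < e /\
    forall w, S w -> bigmax s (fun i => p i (w \- v)) < e -> U w.

Definition sn_compact (T : Type) (W : zmodType) (I : Type) (S : set (T -> W))
    (p : I -> (T -> W) -> R) (C : set (T -> W)) : Prop :=
  C `<=` S /\
  forall (L : Type) (U : L -> set (T -> W)),
    (forall l, sn_open S p (U l)) -> C `<=` \bigcup_l U l ->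
    exists (n : nat) (ls : 'I_n -> L), C `<=` \bigcup_k U (ls k).

Definition lin_subspace (Om : Type) (S : set (Om -> K)) : Prop :=
  S (fun _ => 0) /\
  forall (a : K) f g, S f -> S g -> S (fun w => a * f w + g w).

Definition lin_on (Om D : Type) (S : set (Om -> K)) (T : (Om -> K) -> D -> K)
  : Prop :=
  forall (a : K) f g, S f -> S g ->
    T (fun w => a * f w + g w) = (fun x => a * T f x + T g x).

Definition abs_convex (Om : Type) (C : set (Om -> K)) : Prop :=
  forall f g (a c : K), C f -> C g -> aK a + aK c <= 1 ->
    C (fun w => a * f w + c * g w).

Definition is_seminorm (E : lmodType K) (p : E -> R) : Prop :=
  (forall e, 0 <= p e) /\
  (forall (a : K) e, p (a *: e) = aK a * p e) /\
  (forall e1 e2, p (e1 + e2) <= p e1 + p e2).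

Definition nontriv_lcHs_directed (E : lmodType K) (A : Type) (pE : A -> E -> R)
  : Prop :=
  (forall al, is_seminorm (pE al)) /\
  (forall al be, exists ga (C : R), forall e,
      Num.max (pE al e) (pE be e) <= C * pE ga e) /\
  (forall e, (forall al, pE al e = 0) -> e = 0) /\
  (exists e : E, e <> 0).

Section FV.
Context (Om J M : Type) (om : M -> Type) (nu : J -> forall m, om m -> R)
        (AP : set (Om -> K)) (domT : M -> set (Om -> K))
        (T : forall m, (Om -> K) -> om m -> K).

Definition FVset : set (Om -> K) :=
  [set f | AP f /\ (forall m, domT m f) /\
           forall j m, has_ubound (range (fun x : om m => aK (T f x) * nu j x))].

Definition FVsn (i : J * M) (f : Om -> K) : R :=
  sup (range (fun x : om i.2 => aK (T f x) * nu i.1 x)).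

Definition FVdual (y : (Om -> K) -> K) : Prop :=
  (forall (a : K) f g, FVset f -> FVset g ->
      y (fun w => a * f w + g w) = a * y f + y g) /\
  exists (s : seq (J * M)) (C : R),
    forall f, FVset f -> aK (y f) <= C * bigmax s (fun i => FVsn i f).

Definition FVequicont (H : set ((Om -> K) -> K)) : Prop :=
  H `<=` FVdual /\
  exists (s : seq (J * M)) (C : R),
    forall y f, H y -> FVset f -> aK (y f) <= C * bigmax s (fun i => FVsn i f).

Definition Tmx (m : M) (x : om m) : (Om -> K) -> K := fun f => T f x.

Definition dom_space : Prop :=
  (forall f, FVset f -> (forall i, FVsn i f = 0) -> f = (fun _ => 0)) /\
  (forall i1 i2, exists i3 (C : R), forall f, FVset f ->
      Num.max (FVsn i1 f) (FVsn i2 f) <= C * FVsn i3 f) /\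
  (forall x : Om, FVdual (fun f => f x)).

Definition FVabsconv_compact (C : set (Om -> K)) : Prop :=
  abs_convex C /\ sn_compact FVset FVsn C.

Section Eps.
Context (E : lmodType K) (A : Type) (pE : A -> E -> R).

(* FV(Omega) eps E: continuous linear maps FV(Omega)'_kappa -> E, where
   kappa is generated by the seminorms y |-> sup_{f in C} |y f| for
   absolutely convex compact C in FV(Omega). *)
Definition FVepsE (u : ((Om -> K) -> K) -> E) : Prop :=
  (forall (a : K) y1 y2, FVdual y1 -> FVdual y2 ->
      u (fun f => a * y1 f + y2 f) = a *: u y1 + u y2) /\
  forall al, exists (n : nat) (Cs : 'I_n -> set (Om -> K)),
    (forall k, FVabsconv_compact (Cs k)) /\
    exists C : R, forall y, FVdual y ->
      pE al (u y) <= C * \big[Num.max/0]_(k < n) sup [set aK (y f) | f in Cs k].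

(* topology of uniform convergence on equicontinuous subsets of FV' *)
Definition eps_index := ({H : set ((Om -> K) -> K) | FVequicont H} * A)%type.

Definition eps_sn (i : eps_index) (u : ((Om -> K) -> K) -> E) : R :=
  sup [set pE i.2 (u y) | y in sval i.1].

Definition wsn (i : J * M * A) (u : ((Om -> K) -> K) -> E) : R :=
  sup (range (fun x : om i.1.2 => pE i.2 (u (@Tmx i.1.2 x)) * nu i.1.1 x)).

End Eps.
End FV.
End LCS.

(* Main.v *)
Require Import Defs.
From mathcomp Require Import all_boot all_order all_algebra.
From mathcomp Require Import all_classical all_reals.
From mathcomp Require Import complex.
From mathcomp Require Import ring lra.
Import Order.TTheory GRing.Theory Num.Theory.
Local Open Scope ring_scope.
Local Open Scope classical_set_scope.
Set Implicit Arguments. Unset Strict Implicit. Unset Printing Implicit Defensive.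

Section Khelp.
Context (R : realType).

Definition emb (b : bool) : R -> KK R b :=
  match b return R -> KK R b with true => fun r => r | false => fun r => (r%:C)%C end.
Definition ReK (b : bool) : KK R b -> R :=
  match b return KK R b -> R with true => fun r => r | false => fun z => complex.Re z end.
Definition ImK (b : bool) : KK R b -> R :=
  match b return KK R b -> R with true => fun r => 0 | false => fun z => complex.Im z end.
Definition iota (b : bool) : KK R b :=
  match b return KK R b with true => 0 | false => 'i%C end.

Lemma embD b x y : emb b (x + y) = emb b x + emb b y.
Proof. by case: b => //=; rewrite raddfD. Qed.
Lemma embM b x y : emb b (x * y) = emb b x * emb b y.
Proof. by case: b => //=; rewrite rmorphM. Qed.
Lemma emb0 b : emb b 0 = 0. Proof. by case: b. Qed.
Lemma emb1 b : emb b 1 = 1. Proof. by case: b. Qed.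
Lemma embN b x : emb b (- x) = - emb b x.
Proof. by case: b => //=; rewrite raddfN. Qed.
Lemma embV b x : emb b (x^-1) = (emb b x)^-1.
Proof. by case: b => //=; rewrite fmorphV. Qed.
Lemma ler_emb b x y : (emb b x <= emb b y) = (x <= y).
Proof. by case: b => //=; rewrite lecR. Qed.
Lemma emb_inj b : injective (emb b).
Proof. by case: b => //= x y /complexI. Qed.
Lemma embaK b z : emb b (absK z) = `|z|.
Proof.
by case: b z.
Qed.
Lemma aK_emb b t : absK (emb b t) = `|t|.
Proof.
case: b => //=. by rewrite expr0n /= addr0 sqrtr_sqr.
Qed.
Lemma ReK_emb b t : ReK (emb b t) = t. Proof. by case: b. Qed.
Lemma ReKD b (x y : KK R b) : ReK (x + y) = ReK x + ReK y.
Proof. by case: b x y => //= -[? ?] [? ?]. Qed.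
Lemma ImKD b (x y : KK R b) : ImK (x + y) = ImK x + ImK y.
Proof. case: b x y => //= [*|[? ?] [? ?]] //=; by rewrite addr0. Qed.
Lemma ReK_embM b t (x : KK R b) : ReK (emb b t * x) = t * ReK x.
Proof. case: b x => //= -[a c] /=; ring. Qed.
Lemma ImK_embM b t (x : KK R b) : ImK (emb b t * x) = t * ImK x.
Proof. case: b x => //= [x|[a c]] /=; ring. Qed.
Lemma K_decomp b (z : KK R b) : z = emb b (ReK z) + emb b (ImK z) * iota b.
Proof. case: b z => //= [z|[a c]]; first by rewrite mulr0 addr0.
 by apply/eqP; rewrite eq_complex /=; apply/andP; split; apply/eqP; ring. Qed.
Lemma ReK_cf b be be' (z : KK R b) :
  ReK ((emb b be - emb b be' * iota b) * z) = be * ReK z + be' * ImK z.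
Proof. case: b z => //= [z|[a c]] /=; ring. Qed.
Lemma ReK_le b (z : KK R b) : ReK z <= absK z.
Proof.
case: b z => //= [z|[a c]] /=; first exact: ler_norm.
apply: le_trans (ler_norm a) _.
rewrite -sqrtr_sqr ler_sqrt ?lerDl ?sqr_ge0 //.
by rewrite addr_ge0 ?sqr_ge0.
Qed.

Lemma aK_ge0 b (z : KK R b) : 0 <= absK z.
Proof. by rewrite -(ler_emb b) emb0 embaK. Qed.
Lemma aKM b (x y : KK R b) : absK (x * y) = absK x * absK y.
Proof. by apply: (@emb_inj b); rewrite embM !embaK normrM. Qed.
Lemma aKD b (x y : KK R b) : absK (x + y) <= absK x + absK y.
Proof. by rewrite -(ler_emb b) embD !embaK ler_normD. Qed.
Lemma aK0 b : absK (0 : KK R b) = 0.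
Proof. by apply: (@emb_inj b); rewrite emb0 embaK normr0. Qed.
Lemma aK1 b : absK (1 : KK R b) = 1.
Proof. by apply: (@emb_inj b); rewrite emb1 embaK normr1. Qed.
Lemma aKN b (x : KK R b) : absK (- x) = absK x.
Proof. by apply: (@emb_inj b); rewrite !embaK normrN. Qed.
Lemma aKB b (x y : KK R b) : absK (x - y) = absK (y - x).
Proof. by rewrite -opprB aKN. Qed.
Lemma aK_eq0 b (x : KK R b) : absK x = 0 -> x = 0.
Proof. by move=> h; apply/eqP; rewrite -normr_eq0 -embaK h emb0. Qed.
Lemma aKV b (x : KK R b) : absK (x^-1) = (absK x)^-1.
Proof. by apply: (@emb_inj b); rewrite embV !embaK normfV. Qed.
Lemma rotK b (z : KK R b) : exists w : KK R b, absK w = 1 /\ ReK (w * z) = absK z.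
Proof.
have [->|z0] := eqVneq z 0.
  by exists 1; rewrite aK1 mulr0 aK0; split => //; clear; case: b.
exists (emb b (absK z) / z); split.
  rewrite aKM aK_emb aKV ger0_norm ?aK_ge0 // mulfV //.
  by apply/eqP => /aK_eq0 /eqP; rewrite (negPf z0).
by rewrite mulfVK // ReK_emb.
Qed.
Lemma ReK0 b : ReK (0 : KK R b) = 0. Proof. by case: b. Qed.
Lemma ReK_sum b (I : Type) (r : seq I) (G : I -> KK R b) :
  ReK (\sum_(i <- r) G i) = \sum_(i <- r) ReK (G i).
Proof. by elim: r => [|i r IH]; rewrite ?big_nil ?ReK0 // !big_cons ReKD IH. Qed.
End Khelp.

Lemma eq_double' (V : zmodType) (a : V) : a = a + a -> a = 0.
Proof. move=> h; have := congr1 (fun z => z - a) h; by rewrite subrr addrK => ->. Qed.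

Section HBsec.
Context (R : realType) (Z : zmodType) (sc : R -> Z -> Z).
Hypotheses (scA : forall a c z, sc a (sc c z) = sc (a * c) z) (sc1 : forall z, sc 1 z = z)
 (scDl : forall a c z, sc (a + c) z = sc a z + sc c z)
 (scDr : forall a z1 z2, sc a (z1 + z2) = sc a z1 + sc a z2).
Variable mu : Z -> R.
Hypotheses (muD : forall z1 z2, mu (z1 + z2) <= mu z1 + mu z2)
  (muZ : forall t z, 0 <= t -> mu (sc t z) = t * mu z).

Lemma sc0 z : sc 0 z = 0.
Proof. by apply: eq_double'; rewrite -scDl addr0. Qed.
Lemma scN a z : sc (- a) z = - sc a z.
Proof. by apply/eqP; rewrite -addr_eq0 -scDl addNr sc0. Qed.
Lemma scr0 a : sc a 0 = 0.
Proof. by apply: eq_double'; rewrite -scDr addr0. Qed.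
Lemma scrN a z : sc a (- z) = - sc a z.
Proof. by apply/eqP; rewrite -addr_eq0 -scDr addNr scr0. Qed.
Lemma sc_sum a (I : Type) (r : seq I) (F : I -> Z) :
  sc a (\sum_(i <- r) F i) = \sum_(i <- r) sc a (F i).
Proof. elim: r => [|i r IH]; by rewrite ?big_nil ?scr0 // !big_cons scDr IH. Qed.
Lemma mu0 : mu 0 = 0.
Proof. by rewrite -(sc0 0) muZ // mul0r. Qed.

Lemma hb_step (X : Type) (x0 : X) (addX : X -> X -> X) (scX : R -> X -> X)
  (phi : X -> R) (P : X -> Z)
  (phiD : forall x y, phi (addX x y) = phi x + phi y)
  (PD : forall x y, P (addX x y) = P x + P y)
  (phiZ : forall r x, phi (scX r x) = r * phi x)
  (PZ : forall r x, P (scX r x) = sc r (P x))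
  (dom : forall x, phi x <= mu (P x)) (w : Z) :
  exists be, forall x s, phi x + s * be <= mu (P x + sc s w).
Proof.
pose S := [set phi x - mu (P x - w) | x in [set: X]].
have ub : forall x x', phi x - mu (P x - w) <= mu (P x' + w) - phi x'.
  move=> x x'; have h1 := dom (addX x x'); rewrite phiD PD in h1.
  have h2 := muD (P x - w) (P x' + w).
  have e : (P x - w) + (P x' + w) = P x + P x' by rewrite addrACA addNr addr0.
  rewrite e in h2; lra.
have hS : has_ubound S.
  by exists (mu (P x0 + w) - phi x0) => _ [x _ <-]; exact: ub.
have nS : S !=set0 by exists (phi x0 - mu (P x0 - w)), x0.
exists (sup S) => x s.
have [hs|hs0] := ltrP s 0; last first.
  have [->|hsn] := eqVneq s 0; first by rewrite sc0 addr0 mul0r addr0.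
  have hs : 0 < s by rewrite lt_neqAle eq_sym hsn hs0.
  pose x1 := scX s^-1 x.
  have hsup : sup S <= mu (P x1 + w) - phi x1.
    by apply: ge_sup => // _ [y _ <-]; exact: ub.
  have e : P x + sc s w = sc s (P x1 + w).
    by rewrite /x1 PZ scDr scA mulfV ?(lt0r_neq0 hs) // sc1.
  rewrite e muZ; last exact: ltW hs.
  have h := ler_wpM2l (ltW hs) hsup.
  have hphi : phi x1 = s^-1 * phi x by rewrite /x1 phiZ.
  rewrite mulrBr hphi mulrA mulfV ?(lt0r_neq0 hs) // mul1r in h.
  lra.
- pose r := - s; have r0 : 0 < r by rewrite oppr_gt0.
  pose x1 := scX r^-1 x.
  have hsup : phi x1 - mu (P x1 - w) <= sup S by apply: ub_le_sup => //; exists x1.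
  have e : P x + sc s w = sc r (P x1 - w).
    by rewrite /x1 PZ scDr scA mulfV ?(lt0r_neq0 r0) // sc1 scrN /r scN opprK.
  rewrite e muZ; last exact: ltW r0.
  have h := ler_wpM2l (ltW r0) hsup.
  have hphi : phi x1 = r^-1 * phi x by rewrite /x1 phiZ.
  rewrite mulrBr hphi mulrA mulfV ?(lt0r_neq0 r0) // mul1r in h.
  rewrite /r in h *; lra.
Qed.

Lemma hb (v : Z) (W : nat -> Z) n : exists be : nat -> R, forall t (c : nat -> R),
  t * mu v + \sum_(k < n) c k * be k <= mu (sc t v + \sum_(k < n) sc (c k) (W k)).
Proof.
elim: n => [|n [be IH]].
  exists (fun _ => 0) => t c; rewrite !big_ord0 !addr0.
  case: (lerP 0 t) => ht; first by rewrite muZ.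
  have e : sc t v = sc (- t) (sc (-1) v) by rewrite scA mulrN mulr1 opprK.
  rewrite e muZ; last by rewrite oppr_ge0 ltW.
  have h0 : 0 <= mu v + mu (sc (-1) v).
    have e0 : v + sc (-1) v = 0 by rewrite scN sc1 subrr.
    by apply: le_trans (muD v (sc (-1) v)); rewrite e0 mu0.
  have := mulr_ge0 (ltW (eqbRL (oppr_gt0 t) ht)) h0.
  lra.
pose X := (R * (nat -> R))%type.
pose phi := fun x : X => x.1 * mu v + \sum_(k < n) x.2 k * be k.
pose P := fun x : X => sc x.1 v + \sum_(k < n) sc (x.2 k) (W k).
have := @hb_step X (0, fun _ => 0) (fun x y => (x.1 + y.1, fun k => x.2 k + y.2 k))
  (fun r x => (r * x.1, fun k => r * x.2 k)) phi P _ _ _ _ _ (W n).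
case.
- move=> x y; rewrite /phi /= mulrDl [RHS]addrACA -big_split; congr (_ + _).
  by apply: eq_bigr => k _; rewrite mulrDl.
- move=> x y; rewrite /P /= scDl [RHS]addrACA -big_split; congr (_ + _).
  by apply: eq_bigr => k _; rewrite scDl.
- by move=> r x; rewrite /phi /= mulrDr mulr_sumr mulrA; congr (_ + _);
    apply: eq_bigr => k _; rewrite mulrA.
- by move=> r x; rewrite /P /= scDr sc_sum scA; congr (_ + _);
    apply: eq_bigr => k _; rewrite scA.
- by move=> [t c]; apply: IH.
move=> be0 hbe.
exists (fun k => if (k < n)%N then be k else be0) => t c.
rewrite !big_ord_recr /= ltnn.
have e1 : \sum_(i < n) c i * (if (i < n)%N then be i else be0) = \sum_(i < n) c i * be i.
  by apply: eq_bigr => i _; rewrite ltn_ord.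
rewrite e1 !addrA.
exact: (hbe (t, c) (c n)).
Qed.
End HBsec.

Section BigmaxL.
Context (R : realType) (I : Type).
Lemma bm_ge0 (s : seq I) (F : I -> R) : 0 <= bigmax s F.
Proof. by rewrite /bigmax; elim: s => [|i s IH]; rewrite ?big_nil ?big_cons // le_max IH orbT. Qed.
Lemma le_bm (s : seq I) (F : I -> R) i : List.In i s -> F i <= bigmax s F.
Proof.
rewrite /bigmax; elim: s => [//|j s IH] /= [->|h]; rewrite big_cons le_max ?lexx //.
by rewrite IH ?orbT.
Qed.
Lemma bm_le (s : seq I) (F : I -> R) B : 0 <= B -> (forall i, List.In i s -> F i <= B) -> bigmax s F <= B.
Proof.
rewrite /bigmax => B0; elim: s => [|j s IH] h; rewrite ?big_nil ?big_cons // ge_max h /=; last by left.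
by rewrite IH // => i hi; apply: h; right.
Qed.
Lemma bm_cons (s : seq I) (F : I -> R) i : bigmax (i :: s) F = Num.max (F i) (bigmax s F).
Proof. by rewrite /bigmax big_cons. Qed.
End BigmaxL.

Lemma om_ge0 (R : realType) n (F : 'I_n -> R) : 0 <= \big[Num.max/0]_(k < n) F k.
Proof. by apply: (big_rec (fun x : R => 0 <= x)) => // i x _ hx; rewrite le_max hx orbT. Qed.
Lemma le_om (R : realType) n (F : 'I_n -> R) k : F k <= \big[Num.max/0]_(k < n) F k.
Proof. by rewrite (bigD1 k) //= le_max lexx. Qed.
Lemma om_le (R : realType) n (F : 'I_n -> R) B : 0 <= B -> (forall k, F k <= B) -> \big[Num.max/0]_(k < n) F k <= B.
Proof. by move=> B0 h; apply: (big_ind (fun x : R => x <= B)) => // x y hx hy; rewrite ge_max hx hy. Qed.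

Lemma eq_double (V : zmodType) (a : V) : a = a + a -> a = 0.
Proof. move=> h; have := congr1 (fun z => z - a) h; by rewrite subrr addrK => ->. Qed.

Section FVL.
Context (R : realType) (b : bool) (Om J M : Type) (om : M -> Type)
  (nu : J -> forall m : M, om m -> R)
  (AP : set (Om -> KK R b)) (domT : M -> set (Om -> KK R b))
  (T : forall m : M, (Om -> KK R b) -> om m -> KK R b).
Hypotheses (hom : forall m, inhabited (om m)) (nu0 : forall j m (x : om m), 0 <= nu j x)
  (hAP : lin_subspace AP) (hdom : forall m, lin_subspace (domT m))
  (hT : forall m, lin_on (domT m) (@T m)).

Local Notation K := (KK R b).
Local Notation FV := (FVset nu AP domT T).
Local Notation sn := (FVsn nu T).
Definition qs (s : seq (J * M)) (f : Om -> K) := bigmax s (fun i => sn i f).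
Definition lc (a : K) (f g : Om -> K) := fun w => a * f w + g w.

Lemma FV0 : FV (fun _ => 0).
Proof.
split; first by case: hAP.
split; first by move=> m; case: (hdom m).
move=> j m; exists 0 => _ [x _ <-].
have -> : T (fun _ => 0) x = 0.
  have [d0 _] := hdom m.
  have := @hT m 1 _ _ d0 d0 => /(congr1 (fun F => F x)).
  have -> : (fun w : Om => (1 : K) * 0 + 0) = (fun _ => 0) by apply: funext => w; rewrite mulr0 addr0.
  by rewrite mul1r => /eq_double.
by rewrite aK0 mul0r.
Qed.

Lemma T0 m : @T m (fun _ => 0) = (fun _ => 0).
Proof.
have [d0 _] := hdom m.
have := @hT m 1 _ _ d0 d0.
have -> : (fun w : Om => (1 : K) * 0 + 0) = (fun _ => 0) by apply: funext => w; rewrite mulr0 addr0.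
move=> h; apply: funext => x; have := congr1 (fun F => F x) h.
by rewrite mul1r => /eq_double.
Qed.

Lemma sn_ub f j m (x : om m) : FV f -> absK (T f x) * nu j x <= sn (j, m) f.
Proof. by case=> _ [_ hb]; apply: ub_le_sup => //; exists x. Qed.

Lemma sn_le f j m B : (forall x : om m, absK (T f x) * nu j x <= B) -> sn (j, m) f <= B.
Proof.
move=> h; apply: ge_sup; first by case: (hom m) => x; exists (absK (T f x) * nu j x); exists x.
by move=> _ [x _ <-].
Qed.

Lemma sn_ge0 f i : FV f -> 0 <= sn i f.
Proof.
case: i => j m hf; case: (hom m) => x.
by apply: le_trans _ (sn_ub _ x hf); rewrite mulr_ge0 ?aK_ge0.
Qed.

Lemma qs_ge0 s f : 0 <= qs s f.
Proof. exact: bm_ge0. Qed.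

Lemma sn_le_qs s f i : List.In i s -> sn i f <= qs s f.
Proof. exact: (@le_bm _ _ s (fun i => sn i f) i). Qed.

Lemma T_lc m a f g : domT m f -> domT m g -> forall x : om m, T (lc a f g) x = a * T f x + T g x.
Proof. by move=> hf hg x; rewrite /lc (@hT m a f g hf hg). Qed.

Lemma FV_lc a f g : FV f -> FV g -> FV (lc a f g).
Proof.
move=> hf hg; have hf' := hf; have hg' := hg.
case: hf => af [df bf]; case: hg => ag [dg bg].
split; first by case: hAP => _; apply.
split; first by move=> m; case: (hdom m) => _; apply.
move=> j m; exists (absK a * sn (j, m) f + sn (j, m) g) => _ [x _ <-].
rewrite T_lc //.
apply: le_trans (_ : (absK a * absK (T f x) + absK (T g x)) * nu j x <= _).
  by rewrite ler_wpM2r // (le_trans (aKD _ _)) // aKM.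
rewrite mulrDl -mulrA lerD ?ler_wpM2l ?aK_ge0 //; exact: sn_ub.
Qed.

Lemma sn_lc a f g i : FV f -> FV g -> sn i (lc a f g) <= absK a * sn i f + sn i g.
Proof.
case: i => j m hf hg; apply: sn_le => x.
have [_ [df _]] := hf; have [_ [dg _]] := hg.
rewrite T_lc //.
apply: le_trans (_ : (absK a * absK (T f x) + absK (T g x)) * nu j x <= _).
  by rewrite ler_wpM2r // (le_trans (aKD _ _)) // aKM.
rewrite mulrDl -mulrA lerD ?ler_wpM2l ?aK_ge0 //; exact: sn_ub.
Qed.

Lemma qs_lc s a f g : FV f -> FV g -> qs s (lc a f g) <= absK a * qs s f + qs s g.
Proof.
move=> hf hg; apply: bm_le; first by rewrite addr_ge0 ?mulr_ge0 ?aK_ge0 ?qs_ge0.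
move=> i hi; apply: le_trans (sn_lc _ _ hf hg) _.
by rewrite lerD ?ler_wpM2l ?aK_ge0 ?sn_le_qs.
Qed.

Lemma subE (f g : Om -> K) : (f \- g) = lc (-1) g f.
Proof. by apply: funext => w; rewrite /lc mulN1r addrC. Qed.

Lemma FV_sub f g : FV f -> FV g -> FV (f \- g).
Proof. by move=> hf hg; rewrite subE; apply: FV_lc. Qed.

Lemma qs_tri s f g h : FV f -> FV g -> FV h -> qs s (f \- h) <= qs s (f \- g) + qs s (g \- h).
Proof.
move=> hf hg hh.
have -> : f \- h = lc 1 (f \- g) (g \- h) by apply: funext => w; rewrite /lc mul1r subrKA.
by apply: le_trans (qs_lc _ _ (FV_sub hf hg) (FV_sub hg hh)) _; rewrite aK1 mul1r.
Qed.

Lemma qs_self s f : qs s (f \- f) = 0.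
Proof.
apply/eqP; rewrite eq_le qs_ge0 andbT; apply: bm_le => // -[j m] _.
apply: sn_le => x.
have -> : f \- f = (fun _ => 0) by apply: funext => w /=; rewrite subrr.
by rewrite T0 aK0 mul0r.
Qed.


Local Notation dual := (FVdual nu AP domT T).
Definition bnd (y : (Om -> K) -> K) s C := forall f, FV f -> absK (y f) <= C * qs s f.

Lemma Tmx_dual (nupos : forall m (x : om m), exists j, 0 < nu j x) m (x : om m) :
  dual (Tmx T x).
Proof.
split.
  by move=> a f g [_ [df _]] [_ [dg _]]; rewrite /Tmx (@hT m a f g (df m) (dg m)).
have [j hj] := nupos m x.
exists [:: (j, m)], (nu j x)^-1 => f hf.
rewrite /Tmx ler_pdivlMl //.
rewrite mulrC; apply: le_trans (sn_ub _ x hf) _.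
exact: (@sn_le_qs [:: (j, m)] f (j, m) (or_introl erefl)).
Qed.

Lemma dual_lin y a f g : dual y -> FV f -> FV g -> y (lc a f g) = a * y f + y g.
Proof. by case=> h _; apply: h. Qed.

Lemma dual0 y : dual y -> y (fun _ => 0) = 0.
Proof.
move=> hy; have := dual_lin 1 hy FV0 FV0.
have -> : lc 1 (fun _ : Om => 0 : K) (fun _ => 0) = (fun _ => 0).
  by apply: funext => w; rewrite /lc mulr0 addr0.
by rewrite mul1r => /eq_double.
Qed.

Lemma dual_bnd y : dual y -> exists s C, 0 <= C /\ bnd y s C.
Proof.
case=> _ [s [C h]]; exists s, (Num.max C 0); split; first by rewrite le_max lexx orbT.
move=> f hf; apply: le_trans (h f hf) _; rewrite ler_wpM2r ?qs_ge0 //.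
by rewrite le_max lexx.
Qed.

Lemma qs_catl s1 s2 f : qs s1 f <= qs (s1 ++ s2) f.
Proof.
apply: bm_le; first exact: qs_ge0.
by move=> i hi; apply: sn_le_qs; apply: List.in_or_app; left.
Qed.
Lemma qs_catr s1 s2 f : qs s2 f <= qs (s1 ++ s2) f.
Proof.
apply: bm_le; first exact: qs_ge0.
by move=> i hi; apply: sn_le_qs; apply: List.in_or_app; right.
Qed.

Lemma dual_lc a y1 y2 : dual y1 -> dual y2 -> dual (fun f => a * y1 f + y2 f).
Proof.
move=> h1 h2; split.
  move=> c f g hf hg /=; rewrite -/(lc c f g) (dual_lin c h1 hf hg) (dual_lin c h2 hf hg).
  by ring.
have [s1 [C1 [C10 b1]]] := dual_bnd h1; have [s2 [C2 [C20 b2]]] := dual_bnd h2.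
exists (s1 ++ s2), (absK a * C1 + C2) => f hf.
apply: le_trans (aKD _ _) _; rewrite aKM mulrDl -mulrA.
apply: lerD; first apply: ler_wpM2l; rewrite ?aK_ge0 //.
  by apply: le_trans (b1 f hf) _; apply: ler_wpM2l => //; apply: qs_catl.
by apply: le_trans (b2 f hf) _; apply: ler_wpM2l => //; apply: qs_catr.
Qed.

Lemma ball_open (P : Prop) s e f : (P -> FV f) ->
  sn_open FV sn [set w | P /\ FV w /\ qs s (w \- f) < e].
Proof.
move=> hPf; split; first by move=> w [_ []].
move=> v [hP [hv hvf]]; have hf := hPf hP; exists s, (e - qs s (v \- f)); split; first by rewrite subr_gt0.
move=> w hw hwv; split => //; split => //.
apply: le_lt_trans (qs_tri s hw hv hf) _.
by rewrite -ltrBrDr.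
Qed.

Lemma net C (s : seq (J * M)) (e : R) : sn_compact FV sn C -> 0 < e ->
  exists (n : nat) (F : nat -> Om -> K), (forall l, FV (F l)) /\
    forall f, C f -> exists l, (l < n)%N /\ qs s (f \- F l) < e.
Proof.
move=> [CFV hc] e0.
pose U := fun g : Om -> K => [set w | (C g /\ FV g) /\ FV w /\ qs s (w \- g) < e].
have := hc (Om -> K) U (fun g => ball_open s e (fun h : C g /\ FV g => h.2)).
case.
  move=> f hf; exists f => //; split; first by split => //; apply: CFV.
  by split; [apply: CFV | rewrite qs_self].
move=> n [ls hcov].
pose F := fun l : nat => if insub l is Some k then
   (if pselect (FV (ls k)) then ls k else (fun _ => 0)) else (fun _ : Om => 0 : K).
exists n, F; split.
  move=> l; rewrite /F; case: (insub l) => [k|]; last exact: FV0.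
  by case: (pselect (FV (ls k))) => h //; exact: FV0.
move=> f hf; have [k _ [[_ hk] [_ hfk]]] := hcov f hf.
exists (val k); split; first exact: ltn_ord.
by rewrite /F valK; case: (pselect (FV (ls k))) => // h; case: h; case: hC => h _; apply: h.
Qed.

Lemma cbounded C (s : seq (J * M)) : sn_compact FV sn C -> exists B, 0 <= B /\ forall f, C f -> qs s f <= B.
Proof.
move=> hC; have [n [F [hF hnet]]] := net s hC ltr01.
exists (1 + \big[Num.max/0]_(k < n) qs s (F k)); split.
  by rewrite addr_ge0 ?om_ge0.
move=> f hf; have [l [hl hfl]] := hnet f hf.
have hfv : FV f by case: hC => h _; apply: h.
have -> : f = lc 1 (f \- F l) (F l) by apply: funext => w; rewrite /lc mul1r subrK.
apply: le_trans (qs_lc _ _ (FV_sub hfv (hF l)) (hF l)) _.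
rewrite aK1 mul1r lerD //; first exact: ltW.
exact: (le_om (fun k : 'I_n => qs s (F k)) (Ordinal hl)).
Qed.

Definition sk (y : (Om -> K) -> K) (C : set (Om -> K)) := sup [set absK (y f) | f in C].

Lemma sk_le y C B : 0 <= B -> (forall f, C f -> absK (y f) <= B) -> sk y C <= B.
Proof.
move=> B0 h; rewrite /sk; have [[f0 hf0]|hn] := pselect (exists f, C f); last first.
  have -> : [set absK (y f) | f in C] = set0.
    by apply/seteqP; split => // r [f hf _]; apply: hn; exists f.
  by rewrite sup0.
apply: ge_sup; first by exists (absK (y f0)), f0.
by move=> _ [f hf <-]; apply: h.
Qed.


Lemma dual_zero : dual (fun _ => 0).
Proof.
split; first by move=> a f g _ _; rewrite mulr0 addr0.
by exists [::], 0 => f _; rewrite aK0 mul0r.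
Qed.

Definition Gset (s : seq (J * M)) : set ((Om -> K) -> K) :=
  [set g | exists j m (x : om m), List.In (j, m) s /\ g = fun f => emb b (nu j x) * T f x].
Definition combo (gs : seq (K * ((Om -> K) -> K))) (f : Om -> K) := \sum_(p <- gs) p.1 * p.2 f.
Definition wt (gs : seq (K * ((Om -> K) -> K))) := \sum_(p <- gs) absK p.1.

Lemma FV_sum (I : Type) (r : seq I) (a : I -> K) (G : I -> Om -> K) :
  (forall i, FV (G i)) -> FV (fun w => \sum_(i <- r) a i * G i w).
Proof.
move=> hG; elim: r => [|i r IH].
  have -> : (fun w : Om => \sum_(i <- [::]) a i * G i w) = (fun _ => 0).
    by apply: funext => w; rewrite big_nil.
  exact: FV0.
have -> : (fun w : Om => \sum_(j <- i :: r) a j * G j w) =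
  lc (a i) (G i) (fun w => \sum_(j <- r) a j * G j w).
  by apply: funext => w; rewrite big_cons.
exact: FV_lc.
Qed.

Lemma dual_sum g (I : Type) (r : seq I) (a : I -> K) (G : I -> Om -> K) :
  dual g -> (forall i, FV (G i)) ->
  g (fun w => \sum_(i <- r) a i * G i w) = \sum_(i <- r) a i * g (G i).
Proof.
move=> hg hG; elim: r => [|i r IH].
  have -> : (fun w : Om => \sum_(i <- [::]) a i * G i w) = (fun _ => 0).
    by apply: funext => w; rewrite big_nil.
  by rewrite big_nil dual0.
have -> : (fun w : Om => \sum_(j <- i :: r) a j * G j w) =
  lc (a i) (G i) (fun w => \sum_(j <- r) a j * G j w).
  by apply: funext => w; rewrite big_cons.
by rewrite dual_lin // ?big_cons ?IH //; apply: FV_sum.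
Qed.

Lemma Gset_dual s g : Gset s g -> dual g.
Proof.
move=> [j [m [x [hin ->]]]]; split.
  move=> a f h [_ [df _]] [_ [dh _]] /=.
  by rewrite -/(lc a f h) T_lc // mulrDr mulrCA.
exists [:: (j, m)], 1 => f hf; rewrite mul1r aKM aK_emb ger0_norm // mulrC.
apply: le_trans (sn_ub _ x hf) _.
exact: (@sn_le_qs [:: (j, m)] f (j, m) (or_introl erefl)).
Qed.

Lemma Gset_bnd s g f : Gset s g -> FV f -> absK (g f) <= qs s f.
Proof.
move=> [j [m [x [hin ->]]]] hf; rewrite aKM aK_emb ger0_norm // mulrC.
apply: le_trans (sn_ub _ x hf) _.
exact: sn_le_qs.
Qed.

Lemma sum_apply (I : Type) (r : seq I) (G : I -> nat -> K) l :
  (\sum_(i <- r) G i) l = \sum_(i <- r) G i l.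
Proof. by elim: r => [|i r IH]; rewrite ?big_nil // !big_cons -IH. Qed.

Lemma sum_delta N (c : nat -> K) l : (l < N)%N ->
  \sum_(i < N) c i * (if l == i then 1 else 0) = c l.
Proof.
move=> hl; rewrite (bigD1 (Ordinal hl)) //= eqxx mulr1 big1 ?addr0 //.
move=> i hi; case: eqP => [e|]; last by rewrite mulr0.
by case/eqP: hi; apply: val_inj; rewrite /= e.
Qed.

Section Bipolar.
Variables (s : seq (J * M)) (C : R) (y : (Om -> K) -> K) (N : nat) (F : nat -> Om -> K) (eta : R).
Hypotheses (C0 : 0 <= C) (hy : dual y) (hyb : bnd y s C) (hF : forall l, FV (F l)) (eta0 : 0 < eta).

Let C' := C + eta.
Let C'0 : 0 < C'. Proof. by rewrite /C' ltr_wpDl. Qed.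
Let Z := (nat -> K).
Let sc (t : R) (z : Z) : Z := fun l => emb b t * z l.

Definition rep (z : Z) (r : R) := exists gs (e : Z), (forall p, List.In p gs -> Gset s p.2) /\
  (forall l, (l < N)%N -> z l = combo gs (F l) + e l) /\
  r = wt gs / C' + (\sum_(l < N) absK (e l)) / eta.
Definition mu (z : Z) := inf (rep z).

Lemma wt_ge0 gs : 0 <= wt gs.
Proof. by rewrite /wt; elim: gs => [|p gs IH]; rewrite ?big_nil ?big_cons // addr_ge0 ?aK_ge0. Qed.

Lemma rep_ge0 z r : rep z r -> 0 <= r.
Proof.
move=> [gs [e [_ [_ ->]]]]; rewrite addr_ge0 // divr_ge0 ?wt_ge0 ?sumr_ge0 ?ltW //.
by move=> i _; rewrite aK_ge0.
Qed.

Lemma rep_ne z : rep z (wt [::] / C' + (\sum_(l < N) absK (z l)) / eta).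
Proof.
exists [::], z; split => //; split => // l _.
by rewrite /combo big_nil add0r.
Qed.

Lemma mu_le z r : rep z r -> mu z <= r.
Proof. by move=> h; apply: ge_inf => //; exists 0 => x /rep_ge0. Qed.

Lemma mu_ge0 z : 0 <= mu z.
Proof. by apply: lb_le_inf; [exists (wt [::] / C' + (\sum_(l < N) absK (z l)) / eta); apply: rep_ne | move=> x /rep_ge0]. Qed.

Lemma mu_ext z1 z2 : (forall l, (l < N)%N -> z1 l = z2 l) -> mu z1 = mu z2.
Proof.
move=> h; rewrite /mu; congr inf; apply/seteqP; split => r [gs [e [h1 [h2 h3]]]];
  exists gs, e; (split; [done | split => // l hl]); [by rewrite -h // h2 | by rewrite h // h2].
Qed.


Lemma combo_cat gs1 gs2 f : combo (gs1 ++ gs2) f = combo gs1 f + combo gs2 f.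
Proof. by rewrite /combo big_cat. Qed.
Lemma wt_cat gs1 gs2 : wt (gs1 ++ gs2) = wt gs1 + wt gs2.
Proof. by rewrite /wt big_cat. Qed.

Lemma rep_add z1 z2 r1 r2 : rep z1 r1 -> rep z2 r2 -> exists r, rep (z1 + z2) r /\ r <= r1 + r2.
Proof.
move=> [gs1 [e1 [g1 [h1 ->]]]] [gs2 [e2 [g2 [h2 ->]]]].
exists (wt (gs1 ++ gs2) / C' + (\sum_(l < N) absK ((e1 + e2) l)) / eta); split.
  exists (gs1 ++ gs2), (e1 + e2); split.
    by move=> p hp; case: (List.in_app_or _ _ _ hp) => hq; [apply: g1 | apply: g2].
  split => // l hl; have -> : (z1 + z2) l = z1 l + z2 l by [].
  have -> : (e1 + e2) l = e1 l + e2 l by [].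
  rewrite combo_cat (h1 l hl) (h2 l hl).
  by rewrite addrACA.
rewrite wt_cat addrACA -mulrDl -mulrDl lerD2l; apply: ler_wpM2r; first by rewrite invr_ge0 ltW.
rewrite -big_split /=; apply: ler_sum => l _; exact: aKD.
Qed.

Lemma muD z1 z2 : mu (z1 + z2) <= mu z1 + mu z2.
Proof.
have h : forall r1 r2, rep z1 r1 -> rep z2 r2 -> mu (z1 + z2) <= r1 + r2.
  move=> r1 r2 h1 h2; have [r [hr hle]] := rep_add h1 h2.
  exact: le_trans (mu_le hr) hle.
have h1 : forall r2, rep z2 r2 -> mu (z1 + z2) - r2 <= mu z1.
  move=> r2 h2; apply: lb_le_inf; first by eexists; apply: rep_ne.
  move=> r1 h1; have := h r1 r2 h1 h2; lra.
have : mu (z1 + z2) - mu z1 <= mu z2.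
  apply: lb_le_inf; first by eexists; apply: rep_ne.
  move=> r2 h2; have := h1 r2 h2; lra.
lra.
Qed.

Lemma in_map_ex (T1 T2 : Type) (f : T1 -> T2) (r : seq T1) p :
  List.In p (map f r) -> exists p0, List.In p0 r /\ p = f p0.
Proof.
elim: r => [//|q r IH] /= [<-|h]; first by exists q; split => //; left.
by have [p0 [hp0 ->]] := IH h; exists p0; split => //; right.
Qed.

Lemma rep_sc t z r : 0 < t -> rep z r -> rep (sc t z) (t * r).
Proof.
move=> t0 [gs [e [g [h ->]]]].
exists [seq (emb b t * p.1, p.2) | p <- gs], (sc t e); split.
  by move=> p hp; have [p0 [hp0 e0]] := in_map_ex hp; rewrite e0 /=; apply: g.
split.
  move=> l hl; rewrite /sc h // mulrDr /combo big_map mulr_sumr; congr (_ + _).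
  by apply: eq_bigr => p _; rewrite /= mulrA.
rewrite /wt big_map /sc.
under eq_bigr do rewrite /= aKM aK_emb ger0_norm ?ltW //.
under [X in _ = _ + X / _]eq_bigr do rewrite /= aKM aK_emb ger0_norm ?ltW //.
by rewrite -!mulr_sumr mulrDr !mulrA.
Qed.

Lemma muZle t z : 0 < t -> mu (sc t z) <= t * mu z.
Proof.
move=> t0.
have : mu (sc t z) / t <= mu z.
  apply: lb_le_inf; first by eexists; apply: rep_ne.
  move=> r hr; rewrite ler_pdivrMr // mulrC.
  exact: mu_le (rep_sc t0 hr).
by rewrite ler_pdivrMr // mulrC.
Qed.

Lemma muZ t z : 0 <= t -> mu (sc t z) = t * mu z.
Proof.
rewrite le_eqVlt => /orP [/eqP <-|t0].
  rewrite mul0r; apply/eqP; rewrite eq_le mu_ge0 andbT.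
  have -> : mu (sc 0 z) = mu (fun _ => 0).
    by apply: mu_ext => l _; rewrite /sc emb0 mul0r.
  apply: le_trans (mu_le (rep_ne _)) _.
  by rewrite /wt big_nil mul0r add0r big1 ?mul0r // => i _; rewrite aK0.
apply/eqP; rewrite eq_le muZle //=.
have e : z = sc t^-1 (sc t z).
  by apply: funext => l; rewrite /sc mulrA -embM mulVf ?emb1 ?mul1r // lt0r_neq0.
rewrite -ler_pdivlMl //; rewrite {1}e.
by apply: muZle; rewrite invr_gt0.
Qed.

Lemma mu_zero : mu (fun _ => 0) = 0.
Proof.
apply/eqP; rewrite eq_le mu_ge0 andbT.
apply: le_trans (mu_le (rep_ne _)) _.
by rewrite /wt big_nil mul0r add0r big1 ?mul0r // => i _; rewrite aK0.
Qed.

Let scA a c z : sc a (sc c z) = sc (a * c) z.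
Proof. by apply: funext => l; rewrite /sc mulrA embM. Qed.
Let sc1 z : sc 1 z = z.
Proof. by apply: funext => l; rewrite /sc emb1 mul1r. Qed.
Let scDl a c z : sc (a + c) z = sc a z + sc c z.
Proof. by apply: funext => l; rewrite /sc embD mulrDl. Qed.
Let scDr a z1 z2 : sc a (z1 + z2) = sc a z1 + sc a z2.
Proof. by apply: funext => l; rewrite /sc /= mulrDr. Qed.

Let delta (k : nat) : Z := fun l => if l == k then 1 else 0.
Let W (k : nat) : Z := if (k < N)%N then delta k else (fun l => iota R b * delta (k - N)%N l).
Let cz (z : Z) (k : nat) : R := if (k < N)%N then ReK (z k) else ImK (z (k - N)%N).

Lemma decomp z l : (l < N)%N -> (\sum_(k < N + N) sc (cz z k) (W k)) l = z l.
Proof.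
move=> hl; rewrite sum_apply big_split_ord /=.
have e1 : \sum_(i < N) sc (cz z (lshift N i)) (W (lshift N i)) l =
    \sum_(i < N) emb b (ReK (z i)) * (if l == i then 1 else 0).
  by apply: eq_bigr => i _; rewrite /sc /cz /W /= ltn_ord /delta.
have e2 : \sum_(i < N) sc (cz z (rshift N i)) (W (rshift N i)) l =
    \sum_(i < N) (emb b (ImK (z i)) * iota R b) * (if l == i then 1 else 0).
  by apply: eq_bigr => i _; rewrite /sc /cz /W /= ltnNge leq_addr /= addKn /delta mulrA.
rewrite e1 e2 (sum_delta (fun i => emb b (ReK (z i))) hl).
by rewrite (sum_delta (fun i => emb b (ImK (z i)) * iota R b) hl) -K_decomp.
Qed.

Section WithBe.
Variable be : nat -> R.
Let ell (z : Z) := \sum_(k < N + N) cz z k * be k.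
Let lam (l : nat) : K := emb b (be l) - emb b (be (N + l)) * iota R b.
Let h := fun w => \sum_(l < N) lam l * F l w.

Lemma ell_eq z : ell z = \sum_(l < N) ReK (lam l * z l).
Proof.
rewrite /ell big_split_ord /= -big_split /=; apply: eq_bigr => i _.
rewrite /cz /lam ReK_cf /= ltn_ord ltnNge leq_addr /= addKn.
by rewrite [ReK _ * _]mulrC [ImK _ * _]mulrC.
Qed.

Lemma FVh : FV h.
Proof. exact: FV_sum. Qed.

Lemma ell_dual g : dual g -> ell (fun l => g (F l)) = ReK (g h).
Proof. by move=> hg; rewrite ell_eq /h dual_sum // ReK_sum. Qed.
End WithBe.

Lemma bipolar : exists gs, (forall p, List.In p gs -> Gset s p.2) /\ wt gs <= C + eta /\
  forall l, (l < N)%N -> absK (y (F l) - combo gs (F l)) <= eta.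
Proof.
pose v : Z := fun l => y (F l).
have [be hbe] := hb scA sc1 scDl scDr muD muZ v W (N + N).
pose ell (z : Z) := \sum_(k < N + N) cz z k * be k.
have ell_dom : forall z, ell z <= mu z.
  move=> z; have := hbe 0 (cz z); rewrite mul0r add0r.
  suff -> : mu (sc 0 v + \sum_(k < N + N) sc (cz z k) (W k)) = mu z by [].
  apply: mu_ext => l hl.
  have -> : (sc 0 v + \sum_(k < N + N) sc (cz z k) (W k)) l =
     sc 0 v l + (\sum_(k < N + N) sc (cz z k) (W k)) l by [].
  by rewrite decomp // /sc emb0 mul0r add0r.
have ell_v : mu v <= ell v.
  have := hbe 1 (fun k => - cz v k); rewrite mul1r.
  have -> : mu (sc 1 v + \sum_(k < N + N) sc (- cz v k) (W k)) = mu (fun _ => 0).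
    apply: mu_ext => l hl.
    have -> : (sc 1 v + \sum_(k < N + N) sc (- cz v k) (W k)) l =
       sc 1 v l + (\sum_(k < N + N) sc (- cz v k) (W k)) l by [].
    rewrite sum_apply.
    under eq_bigr do rewrite /sc embN mulNr.
    rewrite sumrN; have := decomp v hl; rewrite sum_apply /sc => ->.
    by rewrite emb1 mul1r subrr.
  rewrite mu_zero.
  have -> : \sum_(k < N + N) - cz v k * be k = - ell v.
    by rewrite /ell -sumrN; apply: eq_bigr => k _; rewrite mulNr.
  lra.
case: (ltrP (mu v) 1) => hv.
  have [r hr hlt] : exists2 r, rep v r & r < mu v + (1 - mu v).
    apply: inf_adherent; first by rewrite subr_gt0.
    split; first by eexists; apply: rep_ne.
    by exists 0 => x /rep_ge0.
  rewrite addrC subrK in hlt.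
  case: hr => gs [e [hg [hrep hr]]]; exists gs; split => //.
  have hS : 0 <= (\sum_(l < N) absK (e l)) / eta.
    by apply: divr_ge0; [apply: sumr_ge0 => i _; exact: aK_ge0 | exact: ltW].
  have hW : 0 <= wt gs / C' by apply: divr_ge0; [exact: wt_ge0 | exact: ltW].
  split.
    have : wt gs / C' < 1 by lra.
    by rewrite ltr_pdivrMr // mul1r => /ltW.
  move=> l hl; rewrite [y (F l)](hrep l hl) addrAC subrr add0r.
  have : (\sum_(l < N) absK (e l)) / eta < 1 by lra.
  rewrite ltr_pdivrMr // mul1r => hlt'; apply: ltW; apply: le_lt_trans hlt'.
  rewrite (bigD1 (Ordinal hl)) //= lerDl sumr_ge0 // => i _; exact: aK_ge0.
exfalso.
pose lam (l : nat) : K := emb b (be l) - emb b (be (N + l)) * iota R b.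
pose h := fun w => \sum_(l < N) lam l * F l w.
have hFV : FV h := FVh be.
have ellR : forall g, dual g -> ell (fun l => g (F l)) = ReK (g h) := ell_dual be.
have hq : qs s h <= C'^-1.
  apply: bm_le; first by rewrite invr_ge0 ltW.
  move=> [j m] hin; apply: sn_le => x.
  pose ga := fun f => emb b (nu j x) * T f x.
  have hga : Gset s ga by exists j, m, x.
  have [om' [hom' hR]] := rotK (ga h).
  pose g' := fun f => (emb b C' * om') * ga f + (fun _ : Om -> K => 0 : K) f.
  have hg' : dual g' by apply: dual_lc; [exact: Gset_dual hga | exact: dual_zero].
  have r1 : rep (fun l => g' (F l)) 1.
    exists [:: (emb b C' * om', ga)], (fun _ => 0); split.
      by move=> p [<-|[]].
    split.
      by move=> l hl; rewrite /combo big_cons big_nil /g' !addr0.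
    rewrite /wt big_cons big_nil addr0 aKM aK_emb hom' mulr1 ger0_norm ?ltW //.
    by rewrite mulfV ?lt0r_neq0 // big1 ?mul0r ?addr0 // => i _; rewrite aK0.
  have := le_trans (ell_dom _) (mu_le r1).
  rewrite ellR // /g' addr0 -mulrA ReK_embM hR /ga aKM aK_emb ger0_norm //.
  by rewrite -ler_pdivlMl // mulrC mulr1.
have hy1 : absK (y h) <= C * C'^-1.
  apply: le_trans (hyb hFV) _; exact: (ler_wpM2l C0 hq).
have hC : C * C'^-1 < 1 by rewrite ltr_pdivrMr // mul1r /C' ltrDl.
have := ReK_le (y h).
rewrite -ellR //.
have : mu v <= ell v := ell_v.
rewrite /v => h1 h2.
lra.
Qed.
End Bipolar.


Lemma net_union n (Cs : 'I_n -> set (Om -> K)) (s : seq (J * M)) (e : R) :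
  (forall k, sn_compact FV sn (Cs k)) -> 0 < e ->
  exists (N : nat) (F : nat -> Om -> K), (forall l, FV (F l)) /\
    forall k f, Cs k f -> exists l, (l < N)%N /\ qs s (f \- F l) < e.
Proof.
move=> hC e0.
have : forall k, exists NF : nat * (nat -> Om -> K), (forall l, FV (NF.2 l)) /\
    forall f, Cs k f -> exists l, (l < NF.1)%N /\ qs s (f \- NF.2 l) < e.
  by move=> k; have [N [F hF]] := net s (hC k) e0; exists (N, F).
case/boolp.choice => NF hNF.
pose Nm := (\sum_(k < n) (NF k).1).+1.
have Nm0 : (0 < Nm)%N by [].
pose G := fun l : nat => if @insub nat (fun x => (x < n)%N) _ (l %/ Nm)%N is Some k
  then (NF k).2 (l %% Nm)%N else (fun _ : Om => 0 : K).
exists (n * Nm)%N, G; split.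
  move=> l; rewrite /G; case: insubP => [k _ _|_]; last exact: FV0.
  exact: (proj1 (hNF k)).
move=> k f hf; have [l [hl hfl]] := proj2 (hNF k) f hf.
have hlN : (l < Nm)%N.
  apply: (leq_trans hl); rewrite /Nm; apply: leqW; rewrite (bigD1 k) //= leq_addr //.
exists (k * Nm + l)%N; split.
  have := ltn_ord k; move: hlN; rewrite -/(nat_of_ord k); move: (nat_of_ord k) => kk.
  move=> h1 h2; have : (kk.+1 * Nm <= n * Nm)%N by rewrite leq_mul2r h2 orbT.
  by rewrite mulSn => h3; apply: leq_trans h3; rewrite addnC ltn_add2r.
rewrite /G divnMDl // divn_small // addn0 valK.
by rewrite modnMDl modn_small.
Qed.

Lemma combo_nil : combo [::] = (fun _ => 0).
Proof. by apply: funext => f; rewrite /combo big_nil. Qed.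
Lemma combo_cons p gs : combo (p :: gs) = fun f => p.1 * p.2 f + combo gs f.
Proof. by apply: funext => f; rewrite /combo big_cons. Qed.

Lemma dual_combo s gs : (forall p, List.In p gs -> Gset s p.2) -> dual (combo gs).
Proof.
elim: gs => [|p gs IH] h; first by rewrite combo_nil; exact: dual_zero.
rewrite combo_cons; apply: dual_lc; first by apply: Gset_dual; apply: h; left.
by apply: IH => q hq; apply: h; right.
Qed.

Lemma combo_bnd s gs f : (forall p, List.In p gs -> Gset s p.2) -> FV f ->
  absK (combo gs f) <= wt gs * qs s f.
Proof.
move=> + hf; elim: gs => [|p gs IH] h.
  by rewrite combo_nil /wt big_nil aK0 mul0r.
rewrite combo_cons /wt big_cons mulrDl; apply: le_trans (aKD _ _) _.
apply: lerD; first by rewrite aKM ler_wpM2l ?aK_ge0 //; apply: Gset_bnd hf; apply: h; left.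
by apply: IH => q hq; apply: h; right.
Qed.

Section Eps.
Context (E : lmodType K) (A : Type) (pE : A -> E -> R).
Hypothesis hpE : forall al, is_seminorm (pE al).

Lemma pE_ge0 al e : 0 <= pE al e. Proof. by case: (hpE al). Qed.
Lemma pEZ al a e : pE al (a *: e) = absK a * pE al e. Proof. by case: (hpE al) => _ []. Qed.
Lemma pED al e1 e2 : pE al (e1 + e2) <= pE al e1 + pE al e2. Proof. by case: (hpE al) => _ []. Qed.
Lemma pEN al e : pE al (- e) = pE al e.
Proof. by rewrite -scaleN1r pEZ aKN aK1 mul1r. Qed.
Lemma pEB al e1 e2 : pE al (e1 - e2) <= pE al e1 + pE al e2.
Proof. by apply: le_trans (pED _ _ _) _; rewrite pEN. Qed.
Lemma pE_sum al (I : Type) (r : seq I) (F : I -> E) :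
  pE al (\sum_(i <- r) F i) <= \sum_(i <- r) pE al (F i).
Proof.
elim: r => [|i r IH]; first by rewrite !big_nil -(scale0r 0) pEZ aK0 mul0r.
by rewrite !big_cons; apply: le_trans (pED _ _ _) _; rewrite lerD2l.
Qed.

Local Notation epsE := (FVepsE nu AP domT T pE).

Lemma u_lin u a y1 y2 : epsE u -> dual y1 -> dual y2 ->
  u (fun f => a * y1 f + y2 f) = a *: u y1 + u y2.
Proof. by case=> h _; apply: h. Qed.


Lemma u0 u : epsE u -> u (fun _ => 0) = 0.
Proof.
move=> hu; have := u_lin 1 hu dual_zero dual_zero.
have -> : (fun f : Om -> K => 1 * (0 : K) + 0) = (fun _ => 0).
  by apply: funext => f; rewrite mulr0 addr0.
by rewrite scale1r => /eq_double.
Qed.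

Lemma uZ u a y : epsE u -> dual y -> u (fun f => a * y f) = a *: u y.
Proof.
move=> hu hy; have := u_lin a hu hy dual_zero.
have -> : (fun f => a * y f + 0) = (fun f => a * y f) by apply: funext => f; rewrite addr0.
by rewrite u0 // addr0.
Qed.

Lemma ucont u al : epsE u -> exists n (Cs : 'I_n -> set (Om -> K)) (c : R),
  (forall k, FVabsconv_compact nu AP domT T (Cs k)) /\ 0 <= c /\
  forall y, dual y -> pE al (u y) <= c * \big[Num.max/0]_(k < n) sk y (Cs k).
Proof.
case=> _ /(_ al) [n [Cs [hCs [c hc]]]]; exists n, Cs, (Num.max c 0); split => //.
split; first by rewrite le_max lexx orbT.
move=> y hy; apply: le_trans (hc y hy) _; apply: ler_wpM2r; last by rewrite le_max lexx.
exact: om_ge0.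
Qed.

Lemma EB u s al : epsE u -> exists K0, 0 <= K0 /\
  forall y C, 0 <= C -> dual y -> bnd y s C -> pE al (u y) <= C * K0.
Proof.
move=> hu; have [n [Cs [c [hCs [c0 hc]]]]] := ucont al hu.
have : forall k, exists B, 0 <= B /\ forall f, Cs k f -> qs s f <= B.
  by move=> k; case: (hCs k) => _ hk; apply: cbounded.
case/boolp.choice => Bf hBf.
exists (c * \big[Num.max/0]_(k < n) Bf k); split; first by rewrite mulr_ge0 ?om_ge0.
move=> y C C0 hy hb; apply: le_trans (hc y hy) _.
rewrite mulrCA ler_wpM2l //.
apply: om_le; first by rewrite mulr_ge0 ?om_ge0.
move=> k; apply: sk_le; first by rewrite mulr_ge0 ?om_ge0.
move=> f hf; have [_ [hsub _]] := hCs k.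
apply: le_trans (hb f (hsub f hf)) _; apply: ler_wpM2l => //.
apply: le_trans (proj2 (hBf k) f hf) _.
exact: (le_om Bf k).
Qed.


Hypothesis nupos : forall m (x : om m), exists j, 0 < nu j x.

Lemma epsE_sub u1 u2 : epsE u1 -> epsE u2 -> epsE (u1 \- u2).
Proof.
move=> h1 h2; split.
  move=> a y1 y2 hy1 hy2 /=; rewrite !u_lin // scalerBr opprD addrACA.
  by [].
move=> al.
have [n1 [Cs1 [c1 [hC1 [c10 hc1]]]]] := ucont al h1.
have [n2 [Cs2 [c2 [hC2 [c20 hc2]]]]] := ucont al h2.
pose Cs := fun k : 'I_(n1 + n2) => match fintype.split k with inl k1 => Cs1 k1 | inr k2 => Cs2 k2 end.
exists (n1 + n2)%N, Cs; split.
  by move=> k; rewrite /Cs; case: (fintype.split k).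
exists (c1 + c2) => y hy /=.
apply: le_trans (pEB _ _ _) _.
set Mx := \big[Num.max/0]_(k < n1 + n2) sk y (Cs k).
have hM1 : \big[Num.max/0]_(k < n1) sk y (Cs1 k) <= Mx.
  apply: om_le; first exact: om_ge0.
  move=> k; have -> : Cs1 k = Cs (lshift n2 k) by rewrite /Cs (unsplitK (inl k)).
  exact: (le_om (fun k => sk y (Cs k))).
have hM2 : \big[Num.max/0]_(k < n2) sk y (Cs2 k) <= Mx.
  apply: om_le; first exact: om_ge0.
  move=> k; have -> : Cs2 k = Cs (rshift n1 k) by rewrite /Cs (unsplitK (inr k)).
  exact: (le_om (fun k => sk y (Cs k))).
rewrite mulrDl; apply: lerD.
  by apply: le_trans (hc1 y hy) _; rewrite ler_wpM2l.
by apply: le_trans (hc2 y hy) _; rewrite ler_wpM2l.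
Qed.

Lemma dual_scale a y : dual y -> dual (fun f => a * y f).
Proof.
move=> hy; have := dual_lc a hy dual_zero.
have -> // : (fun f => a * y f + (fun _ : Om -> K => 0 : K) f) = (fun f => a * y f).
by apply: funext => f; rewrite addr0.
Qed.

Lemma wsn_bound u j m al : epsE u ->
  has_ubound (range (fun x : om m => pE al (u (Tmx T x)) * nu j x)).
Proof.
move=> hu; have [K0 [K00 hK]] := EB [:: (j, m)] al hu.
exists K0 => _ [x _ <-].
have hd := Tmx_dual nupos x.
have e : pE al (u (Tmx T x)) * nu j x = pE al (u (fun f => emb b (nu j x) * Tmx T x f)).
  by rewrite uZ // pEZ aK_emb ger0_norm // mulrC.
rewrite e -[K0]mul1r; apply: hK => //; first exact: dual_scale.
move=> f hf; rewrite mul1r.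
have hG : Gset [:: (j, m)] (fun f => emb b (nu j x) * T f x) by exists j, m, x; split => //; left.
exact: (Gset_bnd hG hf).
Qed.


Lemma wsn_ub u j m al (x : om m) : epsE u ->
  pE al (u (Tmx T x)) * nu j x <= wsn nu T pE ((j, m), al) u.
Proof. by move=> hu; apply: ub_le_sup; [exact: wsn_bound | exists x]. Qed.

Lemma keyF u s al y C : epsE u -> 0 <= C -> dual y -> bnd y s C ->
  pE al (u y) <= C * bigmax s (fun i => wsn nu T pE (i, al) u).
Proof.
move=> hu C0 hy hyb.
set Wv := bigmax s (fun i => wsn nu T pE (i, al) u).
have W0 : 0 <= Wv by apply: bm_ge0.
have [n [Cs [c [hCs [c0 hc]]]]] := ucont al hu.
have hcomb : forall gs, (forall p, List.In p gs -> Gset s p.2) ->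
    pE al (u (combo gs)) <= wt gs * Wv.
  elim => [|p gs IH] h.
    by rewrite combo_nil u0 // -(scale0r 0) pEZ aK0 /wt big_nil !mul0r.
  have hp : Gset s p.2 by apply: h; left.
  have hgs : forall q, List.In q gs -> Gset s q.2 by move=> q hq; apply: h; right.
  have hd1 := Gset_dual hp; have hd2 := dual_combo hgs.
  rewrite combo_cons (u_lin _ hu hd1 hd2).
  apply: le_trans (pED _ _ _) _; rewrite pEZ /wt big_cons mulrDl; apply: lerD; last exact: IH.
  rewrite ler_wpM2l ?aK_ge0 //.
  case: hp => j [m [x [hin ->]]].
  have e : u (fun f => emb b (nu j x) * T f x) = emb b (nu j x) *: u (Tmx T x).
    exact: (uZ _ hu (Tmx_dual nupos x)).
  rewrite e pEZ aK_emb ger0_norm // mulrC.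
  apply: le_trans (@wsn_ub u j m al x hu) _.
  exact: (le_bm (fun i => wsn nu T pE (i, al) u) hin).
apply/ler_addgt0Pr => ep ep0.
pose K1 := c * (2 * C + 2) + Wv.
have K10 : 0 <= K1 by rewrite /K1 addr_ge0 // mulr_ge0 // addr_ge0 // mulr_ge0.
pose eta := Num.min 1 (ep / (K1 + 1)).
have K11 : 0 < K1 + 1 by rewrite ltr_wpDl.
have eta0 : 0 < eta by rewrite /eta lt_min ltr01 divr_gt0.
have eta1 : eta <= 1 by rewrite /eta ge_min lexx.
have etaK : eta * K1 <= ep.
  have : eta <= ep / (K1 + 1) by rewrite /eta ge_min lexx orbT.
  rewrite ler_pdivlMr // => h1; apply: le_trans h1.
  by apply: ler_wpM2l; [exact: ltW | rewrite lerDl].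
have [N [F [hF hnet]]] := net_union s (fun k => proj2 (hCs k)) eta0.
have [gs [hgs [hwt happ]]] := bipolar N C0 hy hyb hF eta0.
pose g := combo gs.
have hg : dual g := dual_combo hgs.
pose d := fun f => (-1) * g f + y f.
have hd : dual d := dual_lc (-1) hg hy.
have hdC : forall k f, Cs k f -> absK (d f) <= (2 * C + 2) * eta.
  move=> k f hf.
  have hfv : FV f by case: (hCs k) => _ [hsub _]; apply: hsub.
  have [l [hl hfl]] := hnet k f hf.
  have e : d f = d (f \- F l) + d (F l).
    have := dual_lin 1 hd (FV_sub hfv (hF l)) (hF l).
    have -> : lc 1 (f \- F l) (F l) = f by apply: funext => w; rewrite /lc mul1r subrK.
    by rewrite mul1r.
  rewrite e; apply: le_trans (aKD _ _) _.
  have hfF := FV_sub hfv (hF l).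
  have h1 : absK (d (f \- F l)) <= (C + eta) * eta + C * eta.
    rewrite /d; apply: le_trans (aKD _ _) _; rewrite aKM aKN aK1 mul1r.
    have a1 := combo_bnd hgs hfF.
    have a2 := hyb _ hfF.
    have b1 : wt gs * qs s (f \- F l) <= (C + eta) * eta.
      by apply: ler_pM => //; [exact: wt_ge0 | exact: qs_ge0 | exact: ltW].
    have b2 : C * qs s (f \- F l) <= C * eta by apply: ler_wpM2l => //; exact: ltW.
    rewrite -/g in a1; lra.
  have h2 : absK (d (F l)) <= eta.
    by rewrite /d mulN1r addrC; exact: happ l hl.
  have h3 : eta * eta <= eta * 1 by apply: ler_wpM2l => //; exact: ltW.
  have ee : (C + eta) * eta + C * eta + eta = 2 * C * eta + eta * eta + eta by ring.
  have ee2 : (2 * C + 2) * eta = 2 * C * eta + eta * 1 + eta by ring.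
  lra.
have hsk : \big[Num.max/0]_(k < n) sk d (Cs k) <= (2 * C + 2) * eta.
  have hp : 0 <= (2 * C + 2) * eta by apply: mulr_ge0; [rewrite addr_ge0 // mulr_ge0 | exact: ltW].
  apply: om_le => // k; apply: sk_le => //; exact: hdC.
have hud : pE al (u d) <= c * ((2 * C + 2) * eta).
  by apply: le_trans (hc d hd) _; apply: ler_wpM2l.
have hug : pE al (u g) <= (C + eta) * Wv.
  by apply: le_trans (hcomb gs hgs) _; apply: ler_wpM2r.
have ey : y = fun f => 1 * d f + g f by apply: funext => f; rewrite /d; ring.
rewrite ey u_lin // scale1r; apply: le_trans (pED _ _ _) _.
have ee : c * ((2 * C + 2) * eta) + (C + eta) * Wv = C * Wv + eta * K1 by rewrite /K1; ring.
lra.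
Qed.

Local Notation eps := (@eps_sn R b Om J M om nu AP domT T E A pE).
Local Notation wsn' := (wsn nu T pE).

Lemma eps_le_w u (i : eps_index nu AP domT T A) sH CH : epsE u -> 0 <= CH ->
  (forall y, sval i.1 y -> dual y /\ bnd y sH CH) ->
  eps i u <= CH * bigmax sH (fun jm => wsn' (jm, i.2) u).
Proof.
move=> hu CH0 hH; rewrite /eps_sn.
have hB : 0 <= CH * bigmax sH (fun jm => wsn' (jm, i.2) u) by rewrite mulr_ge0 // bm_ge0.
have [[y0 hy0]|hn] := pselect (exists y, sval i.1 y); last first.
  have -> : [set pE i.2 (u y) | y in sval i.1] = set0.
    by apply/seteqP; split => // r [y hy _]; apply: hn; exists y.
  by rewrite sup0.
apply: ge_sup; first by exists (pE i.2 (u y0)), y0.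
move=> _ [y hy <-]; have [hdy hby] := hH y hy.
exact: keyF.
Qed.

Definition Hjm (jm : J * M) : set ((Om -> K) -> K) := [set y | dual y /\ bnd y [:: jm] 1].
Lemma Hjm_eq jm : FVequicont nu AP domT T (Hjm jm).
Proof.
split; first by move=> y [].
by exists [:: jm], 1 => y f [_ h] hf; apply: h.
Qed.

Lemma w_le_eps u (i : J * M * A) : epsE u ->
  wsn' i u <= eps (exist _ (Hjm i.1) (Hjm_eq i.1), i.2) u.
Proof.
case: i => [[j m] al] hu /=; rewrite /wsn /eps_sn /=.
have [K0 [K00 hK]] := EB [:: (j, m)] al hu.
have hub : has_ubound [set pE al (u y) | y in Hjm (j, m)].
  by exists K0 => _ [y [hy hby] <-]; rewrite -[K0]mul1r; apply: hK.
apply: ge_sup; first by case: (hom m) => x; eexists; exists x.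
move=> _ [x _ <-]; apply: ub_le_sup => //.
exists (fun f => emb b (nu j x) * Tmx T x f).
  split; first exact: dual_scale (Tmx_dual nupos x).
  move=> f hf; rewrite mul1r aKM aK_emb ger0_norm // mulrC.
  apply: le_trans (sn_ub _ x hf) _.
  exact: (@sn_le_qs [:: (j, m)] f (j, m) (or_introl erefl)).
by rewrite (uZ _ hu (Tmx_dual nupos x)) pEZ aK_emb ger0_norm // mulrC.
Qed.

Lemma topo_eq U : sn_open epsE eps U <-> sn_open epsE wsn' U.
Proof.
split.
- move=> [Usub hU]; split => // v hv.
  have [s [e [e0 hball]]] := hU v hv.
  have : forall i : eps_index nu AP domT T A, exists p : seq (J * M) * R, 0 <= p.2 /\
      forall y, sval i.1 y -> dual y /\ bnd y p.1 p.2.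
    move=> [[H [Hsub [sH [CH hCH]]]] al] /=.
    exists (sH, Num.max CH 0); split; first by rewrite le_max lexx orbT.
    move=> y hy; split; first exact: Hsub.
    move=> f hf; apply: le_trans (hCH y f hy hf) _.
    by rewrite ler_wpM2r ?qs_ge0 // le_max lexx.
  case/boolp.choice => ch hch.
  pose s' := List.flat_map (fun i => List.map (fun jm => (jm, i.2)) (ch i).1) s.
  pose Kc := bigmax s (fun i => (ch i).2).
  have Kc0 : 0 <= Kc by apply: bm_ge0.
  exists s', (e / (Kc + 1)); split; first by rewrite divr_gt0 // ltr_wpDl.
  move=> w hw hlt; apply: hball => //.
  have hu := epsE_sub hw (Usub v hv).
  set B' := bigmax s' (fun i => wsn' i (w \- v)).
  have hB : bigmax s (fun i => eps i (w \- v)) <= Kc * B'.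
    apply: bm_le; first by rewrite mulr_ge0 // bm_ge0.
    move=> i hi; have [c0 hc] := hch i.
    apply: le_trans (eps_le_w hu c0 hc) _.
    apply: ler_pM => //; first exact: bm_ge0.
      exact: (le_bm (fun i => (ch i).2) hi).
    apply: bm_le; first exact: bm_ge0.
    move=> jm hjm; apply: (le_bm (fun i => wsn' i (w \- v))).
    apply/List.in_flat_map; exists i; split => //.
    by apply: List.in_map.
  apply: le_lt_trans hB _.
  have : B' < e / (Kc + 1) by [].
  rewrite ltr_pdivlMr ?ltr_wpDl // => h1.
  have hB0 : 0 <= B' by apply: bm_ge0.
  have h2 : Kc * B' <= B' * (Kc + 1) by rewrite mulrDr mulr1 mulrC lerDl.
  exact: le_lt_trans h2 h1.
- move=> [Usub hU]; split => // v hv.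
  have [s [e [e0 hball]]] := hU v hv.
  pose img := fun i : J * M * A => (exist _ (Hjm i.1) (Hjm_eq i.1), i.2) : eps_index nu AP domT T A.
  exists (List.map img s), e; split => // w hw hlt; apply: hball => //.
  have hu := epsE_sub hw (Usub v hv).
  apply: le_lt_trans hlt.
  apply: bm_le; first exact: bm_ge0.
  move=> i hi; apply: le_trans (w_le_eps i hu) _.
  apply: (le_bm (fun i => eps i (w \- v))).
  exact: List.in_map.
Qed.

End Eps.
End FVL.


Theorem lemma3p7 (R : realType) (b : bool)
  (Om J M : Type) (om : M -> Type)
  (nu : J -> forall m : M, om m -> R)
  (AP : set (Om -> KK R b)) (domT : M -> set (Om -> KK R b))
  (T : forall m : M, (Om -> KK R b) -> om m -> KK R b)
  (E : lmodType (KK R b)) (A : Type) (pE : A -> E -> R) :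
  (* standing assumptions *)
  inhabited J -> inhabited M -> (forall m, inhabited (om m)) ->
  (forall j m x, 0 <= nu j m x) ->
  (forall m (x : om m), exists j, 0 < nu j m x) ->
  lin_subspace AP ->
  (forall m, lin_subspace (domT m)) ->
  (forall m, lin_on (domT m) (T m)) ->
  (* FV(Omega) is a dom-space *)
  dom_space nu AP domT T ->
  (* E non-trivial lcHs with directed fundamental system of seminorms *)
  nontriv_lcHs_directed pE ->
  (* (a) *)
  (forall m (x : om m), FVdual nu AP domT T (Tmx T x)) /\
  (* (b) the seminorms ||.||_{j,m,alpha} are finite on FV eps E ... *)
  (forall u, FVepsE nu AP domT T pE u ->
     forall (j : J) (m : M) (al : A),
       has_ubound (range (fun x : om m => pE al (u (Tmx T x)) * nu j m x))) /\
  (* ... and generate the topology of FV eps E *)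
  (forall U, sn_open (FVepsE nu AP domT T pE) (@eps_sn R b Om J M om nu AP domT T E A pE) U
             <-> sn_open (FVepsE nu AP domT T pE) (wsn nu T pE) U).
Proof.
move=> _ _ hom nu0 nupos hAP hdom hT _ hE.
have hpE : forall al, is_seminorm (pE al) by case: hE.
split; first by move=> m x; exact: (Tmx_dual AP hT nupos x).
split; first by move=> u hu j m al; exact: (wsn_bound hom nu0 hAP hdom hT hpE nupos j m al hu).
by move=> U; exact: (topo_eq hom nu0 hAP hdom hT hpE nupos U).
Qed.
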